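(* There exist a sequence of primes $p_j\to\infty$ and a sequence of angles $\alpha_j\in(0,\pi)$ with $\alpha_j\to\pi$ such that, for each $j$, the isosceles triangle whose angle at the apex (between the two equal sides) is $\alpha_j$ is Euclidean sub-$p_j$-toral.
   Context: A $p$-torus is a group isomorphic to $(\mathbb{Z}_p)^\alpha$ for some $\alpha\ge1$. A set $X\subset\mathbb{R}^k$ is Euclidean sub-$p$-toral if there exist $n\ge k$, a $p$-torus $G$ and an action of $G$ on $\mathbb{R}^n$ by isometries such that $X$ (viewed in $\mathbb{R}^n$ via the standard inclusion $\mathbb{R}^k\subset\mathbb{R}^n$) is contained in a single $G$-orbit. A triangle is identified with its set of three vertices. *)

(* Defs.v *)
From HB Require Import structures.
From mathcomp Require Import all_boot all_order all_algebra.
From mathcomp Require Import all_classical all_reals all_analysis.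
Set Implicit Arguments. Unset Strict Implicit. Unset Printing Implicit Defensive.
Import Order.TTheory GRing.Theory Num.Theory.
Local Open Scope ring_scope.

Definition ptorus (p a : nat) := {ffun 'I_a -> 'Z_p}.

Definition sqdist {R : realType} {n : nat} (u v : 'rV[R]_n) : R :=
  \sum_(i < n) (u 0 i - v 0 i) ^+ 2.

Definition isometry {R : realType} {n : nat} (f : 'rV[R]_n -> 'rV[R]_n) : Prop :=
  forall u v, sqdist (f u) (f v) = sqdist u v.

Definition isometric_action {R : realType} (p a n : nat)
    (act : ptorus p a -> 'rV[R]_n -> 'rV[R]_n) : Prop :=
  [/\ forall g, isometry (act g),
      forall x, act 0 x = x &
      forall g h x, act (g + h) x = act g (act h x)].

(* Standard inclusion R^k \subset R^n (pad with zeros). *)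
Definition embed {R : realType} {k n : nat} (v : 'rV[R]_k) : 'rV[R]_n :=
  \row_(i < n) oapp (fun j : 'I_k => v 0 j) 0 (insub (nat_of_ord i) : option 'I_k).

Definition sub_ptoral {R : realType} (p k : nat) (X : set 'rV[R]_k) : Prop :=
  exists (n a : nat) (act : ptorus p a -> 'rV[R]_n -> 'rV[R]_n) (x0 : 'rV[R]_n),
    [/\ (k <= n)%N, (1 <= a)%N, isometric_action act &
        forall x, X x -> exists g, act g x0 = embed x].

Definition pt2 {R : realType} (a b : R) : 'rV[R]_2 :=
  \row_(i < 2) (if nat_of_ord i == 0%N then a else b).

(* The isosceles triangle with apex angle al (legs of length 1, apex at origin). *)
Definition isosceles {R : realType} (al : R) : set 'rV[R]_2 :=
  [set x | x = pt2 0 0 \/ x = pt2 1 0 \/ x = pt2 (cos al) (sin al)].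

(* Main.v *)
Require Import Defs.
From HB Require Import structures.
From mathcomp Require Import all_boot all_order all_algebra.
From mathcomp Require Import all_classical all_reals all_analysis.
From mathcomp Require Import ring lra.
Import Order.TTheory GRing.Theory Num.Theory.
Import numFieldNormedType.Exports.
Local Open Scope ring_scope.
Local Open Scope classical_set_scope.

Section Aux.
Context {R : realType}.

Definition rotc (a c1 c2 : R) (x : 'rV[R]_2) : 'rV[R]_2 :=
  \row_(i < 2) if i == ord0 then c1 + cos a * (x 0 ord0 - c1) - sin a * (x 0 ord_max - c2)
               else c2 + sin a * (x 0 ord0 - c1) + cos a * (x 0 ord_max - c2).

Lemma sqdist2 (u v : 'rV[R]_2) :
  sqdist u v = (u 0 ord0 - v 0 ord0) ^+ 2 + (u 0 ord_max - v 0 ord_max) ^+ 2.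
Proof. rewrite /sqdist big_ord_recr big_ord1 /=. by rewrite (_ : widen_ord _ ord0 = ord0) //; apply: val_inj. Qed.

Lemma rotc_iso a c1 c2 : Defs.isometry (rotc a c1 c2).
Proof.
move=> u v; rewrite !sqdist2 !mxE /=.
have := cos2Dsin2 a; set co := cos a; set s := sin a => H.
rewrite -[X in _ = X]mul1r -H; ring.
Qed.

Lemma row2P (u v : 'rV[R]_2) : u 0 ord0 = v 0 ord0 -> u 0 ord_max = v 0 ord_max -> u = v.
Proof.
move=> h0 h1; apply/rowP => i.
case: i => [[|[|//]] Hi]; first by rewrite (_ : Ordinal Hi = ord0) //; apply: val_inj.
by rewrite (_ : Ordinal Hi = ord_max) //; apply: val_inj.
Qed.

Lemma rotcD a b c1 c2 x : rotc a c1 c2 (rotc b c1 c2 x) = rotc (a + b) c1 c2 x.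
Proof. apply: row2P; rewrite !mxE /= cosD sinD; ring. Qed.

Lemma rotc0 c1 c2 x : rotc (0:R) c1 c2 x = x.
Proof. apply: row2P; rewrite !mxE /= cos0 sin0; ring. Qed.

Lemma cos_per (x : R) (k : nat) : cos (x + pi *+ 2 * k%:R) = cos x.
Proof.
elim: k => [|k IH]; first by rewrite mulr0 addr0.
by rewrite -natr1 mulrDr mulr1 addrA cosD2pi.
Qed.

Lemma sin_per (x : R) (k : nat) : sin (x + pi *+ 2 * k%:R) = sin x.
Proof.
elim: k => [|k IH]; first by rewrite mulr0 addr0.
by rewrite -natr1 mulrDr mulr1 addrA sinD2pi.
Qed.

Lemma rotc_per (a : R) (k : nat) : rotc (a + pi *+ 2 * k%:R) = rotc a.
Proof. by rewrite /rotc cos_per sin_per. Qed.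

Lemma rotc_mod (M k : nat) : (0 < M)%N ->
  rotc (pi *+ 2 / M%:R * (k %% M)%N%:R) = rotc (pi *+ 2 / M%:R * k%:R).
Proof.
move=> M0; rewrite {2}(divn_eq k M) natrD natrM mulrDr addrC.
rewrite (mulrC (k %/ M)%N%:R) mulrA divfK ?pnatr_eq0 -?lt0n //.
by rewrite rotc_per.
Qed.

End Aux.


Lemma embed_id (R : realType) (x : 'rV[R]_2) : embed x = x.
Proof. by apply/rowP => i; rewrite /embed mxE valK. Qed.

Lemma Zp_addv q (a b : 'Z_q) : nat_of_ord (a + b) = ((a + b) %% (Zp_trunc q).+2)%N.
Proof. by []. Qed.

Lemma cos_lt1 {R : realType} (t : R) : 0 < t < pi -> cos t < 1.
Proof.
move=> ht; have s0 := sin_gt0_pi ht; have := cos2Dsin2 t.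
have := cos_le1 t; nra.
Qed.

Lemma sub_ptoral_q (R : realType) (q : nat) : (2 < q)%N ->
  sub_ptoral q (isosceles (pi - pi *+ 2 / q%:R : R)).
Proof.
move=> q2.
have Mq : (Zp_trunc q).+2 = q by apply: Zp_cast; apply: ltnW.
set th : R := pi *+ 2 / q%:R.
have qpos : (0 : R) < q%:R by rewrite ltr0n; apply: leq_trans q2.
have th0 : 0 < th < pi.
  apply/andP; split; first by rewrite divr_gt0 // pmulrn_rgt0 // pi_gt0.
  by rewrite ltr_pdivrMr // -(mulr_natr pi 2) ltr_pM2l ?pi_gt0 // ltr_nat.
have c1 := cos_lt1 th th0.
have hd : 1 - cos th != 0 by rewrite subr_eq0 gt_eqF.
set c2 := sin th / (2 * (1 - cos th)).
have sc2 : sin th * c2 = (1 + cos th) / 2.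
  rewrite /c2 mulrA -expr2 sin2cos2; field; rewrite hd //.
have cc2 : (1 - cos th) * c2 = sin th / 2.
  rewrite /c2; field; rewrite hd //.
exists 2%N, 1%N, (fun (g : ptorus q 1) x =>
   rotc (pi *+ 2 / ((Zp_trunc q).+2)%:R * (nat_of_ord (g ord0))%:R) (1/2) c2 x), (pt2 0 0).
split => //.
  split.
  - by move=> g; apply: rotc_iso.
  - by move=> x; rewrite ffunE /= mulr0 rotc0.
  - move=> g h x; rewrite rotcD ffunE Zp_addv rotc_mod // natrD mulrDr //.
move=> x [->|[->|->]].
- by exists 0; rewrite embed_id ffunE /= mulr0 rotc0.
- exists [ffun=> 1]; rewrite embed_id ffunE /= Mq.
  rewrite (_ : (1 %% q)%:R = 1 :> R); last by rewrite modn_small // ltnW. rewrite mulr1 -/th.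
  apply: row2P; rewrite !mxE /=; nra.
- exists [ffun=> ord_max]; rewrite embed_id ffunE /= Mq.
  have -> : pi *+ 2 / q%:R * (Zp_trunc q).+1%:R = - th + pi *+ 2 * 1%:R.
    have -> : (Zp_trunc q).+1%:R = q%:R - 1 :> R by rewrite -Mq -[in RHS]natr1 addrK.
    rewrite /th; field; by rewrite gt_eqF.
  rewrite rotc_per.
  rewrite [pi - th]addrC sinDpi cosDpi.
  apply: row2P; rewrite !mxE /= cosN sinN; nra.
Qed.

Theorem lemma4 (R : realType) :
  exists (p : nat -> nat) (al : nat -> R),
    [/\ forall j, prime (p j),
        (forall M : nat, exists N : nat, forall j, (N <= j)%N -> (M <= p j)%N),
        (forall j, 0 < al j < pi),
        al j @[j --> \oo] --> (pi : R) &
        forall j, sub_ptoral (p j) (isosceles (al j))].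
Proof.
pose p j := s2val (prime_above j.+2).
have pgt j : (j.+2 < p j)%N by rewrite /p; case: (prime_above j.+2).
exists p, (fun j => pi - pi *+ 2 / (p j)%:R); split.
- by move=> j; rewrite /p; case: (prime_above j.+2).
- move=> M; exists M => j hj; apply: (leq_trans hj); apply: ltnW.
  by apply: ltn_trans (pgt j); apply: ltn_trans (ltnSn _) _.
- move=> j; have qpos : (0 : R) < (p j)%:R by rewrite ltr0n; apply: leq_trans (pgt j).
  have t0 : 0 < pi *+ 2 / (p j)%:R :> R by rewrite divr_gt0 // pmulrn_rgt0 // pi_gt0.
  have t1 : pi *+ 2 / (p j)%:R < pi :> R.
    rewrite ltr_pdivrMr // -(mulr_natr pi 2) ltr_pM2l ?pi_gt0 // ltr_nat.
    by apply: leq_trans (pgt j).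
  apply/andP; split; lra.
- apply/cvgrPdist_lt => e e0.
  near=> j.
  have hj : pi *+ 2 / e <= j%:R by near: j; apply: nbhs_infty_ger.
  have qpos : (0 : R) < (p j)%:R by rewrite ltr0n; apply: leq_trans (pgt j).
  have jq : (j%:R : R) < (p j)%:R by rewrite ltr_nat; apply: ltn_trans (pgt j).
  rewrite opprB addrC subrK ger0_norm; last first.
    apply: divr_ge0; last exact: ltW.
    by apply: ltW; rewrite pmulrn_rgt0 // pi_gt0.
  rewrite ltr_pdivrMr // -ltr_pdivrMl //.
  by rewrite mulrC; apply: le_lt_trans hj jq.
- move=> j; apply: sub_ptoral_q; exact: leq_trans (pgt j).
Unshelve. all: by end_near.
Qed.
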